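(* Let $(F^kx)_{m\le k\le n}$ be a defocusing orbit segment of the billiard map $F$ on $Q(\phi_*,R)$. Let $m'\le m$ and $n'\ge n$ be such that the base points $p(F^kx)$, $m'\le k\le m$, all lie on one circular boundary arc, and the base points $p(F^kx)$, $n\le k\le n'$, all lie on one circular boundary arc. Then the segment $(F^kx)_{m'\le k\le n'}$ is defocusing (with the same sign).
   Context: $Q(\phi_*,R)$ is the asymmetric lemon table, the intersection of two disks whose boundary consists of two circular arcs $\Gamma_r,\Gamma_R$; phase space points $x$ are inward unit vectors based at $p(x)\in\Gamma_r\cup\Gamma_R$ with coordinates $(\phi,\theta)$ ($\phi$ the angular position on the circle, $\theta\in(0,\pi)$ the angle from the positive tangent direction); $F$ is the billiard map. With $d(x)=\rho\sin\theta$ ($\rho$ the radius of the arc containing $p(x)$) and $\tau(x)=|p(x)p(Fx)|$, the derivative in $(\phi,\theta)$ coordinates is $$D_xF=\frac1{d(Fx)}\begin{bmatrix}\tau(x)-d(x)&\tau(x)\\ \tau(x)-d(x)-d(Fx)&\tau(x)-d(Fx)\end{bmatrix}.$$ A finite orbit segment $(F^kx)_{m\le k\le n}$ is positively (resp. negatively) defocusing if all four entries of the matrix $D_{F^mx}F^{n-m}$ (in $(\phi,\theta)$ coordinates) are positive (resp. negative); defocusing means positively or negatively defocusing. *)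

(* Defs.v *)
From Stdlib Require Import Reals Lra Lia ZArith.
Open Scope R_scope.

(** The table is the intersection of the closed disk of centre (c1x,c1y),
    radius rho1 and the closed disk of centre (c2x,c2y), radius rho2, whose
    boundary circles cross.  Its boundary consists of the two circular arcs
    Gamma_1 (on circle 1, inside disk 2) and Gamma_2 (on circle 2, inside
    disk 1).  Every asymmetric lemon table Q(phi_*,R) is of this form. *)
Record Table := mkTable {
  c1x : R; c1y : R; rho1 : R;
  c2x : R; c2y : R; rho2 : R }.

Definition lemon_table (Q : Table) : Prop :=
  0 < rho1 Q /\ 0 < rho2 Q /\
  Rabs (rho1 Q - rho2 Q) < sqrt ((c1x Q - c2x Q) ^ 2 + (c1y Q - c2y Q) ^ 2)
    < rho1 Q + rho2 Q.

(** Phase point: [side] = true means the base point is on Gamma_1, false on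
    Gamma_2; [phi] is the angular position on that circle, [theta] the angle
    from the positive tangent direction (-sin phi, cos phi). *)
Record Phase := mkPhase { side : bool; phi : R; theta : R }.

Definition radius (Q : Table) (s : bool) : R := if s then rho1 Q else rho2 Q.
Definition cenx (Q : Table) (s : bool) : R := if s then c1x Q else c2x Q.
Definition ceny (Q : Table) (s : bool) : R := if s then c1y Q else c2y Q.

Definition px (Q : Table) (x : Phase) : R :=
  cenx Q (side x) + radius Q (side x) * cos (phi x).
Definition py (Q : Table) (x : Phase) : R :=
  ceny Q (side x) + radius Q (side x) * sin (phi x).

(** unit velocity: cos(theta) * tangent + sin(theta) * inward normal,
    tangent = (-sin phi, cos phi), inward normal = (-cos phi, -sin phi). *)
Definition vx (x : Phase) : R :=
  cos (theta x) * (- sin (phi x)) + sin (theta x) * (- cos (phi x)).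
Definition vy (x : Phase) : R :=
  cos (theta x) * cos (phi x) + sin (theta x) * (- sin (phi x)).

(** x is a genuine phase point: inward direction, and base point on the
    open arc (strictly inside the other disk, i.e. not a corner). *)
Definition valid (Q : Table) (x : Phase) : Prop :=
  0 < theta x < PI /\
  (px Q x - cenx Q (negb (side x))) ^ 2 + (py Q x - ceny Q (negb (side x))) ^ 2
    < radius Q (negb (side x)) ^ 2.

(** y = F x (billiard map): p(y) is reached from p(x) by moving along the
    velocity of x, and the velocity of y is the mirror reflection of the
    velocity of x in the tangent line at p(y). (By convexity the first
    boundary point hit is the only one, so this determines F.) *)
Definition step (Q : Table) (x y : Phase) : Prop :=
  valid Q x /\ valid Q y /\
  exists t : R, 0 < t /\
    px Q y = px Q x + t * vx x /\ py Q y = py Q x + t * vy x /\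
    (let nx := cos (phi y) in let ny := sin (phi y) in
     let dot := vx x * nx + vy x * ny in
     vx y = vx x - 2 * dot * nx /\ vy y = vy x - 2 * dot * ny).

Definition is_orbit (Q : Table) (xs : Z -> Phase) (a b : Z) : Prop :=
  (forall k : Z, (a <= k <= b)%Z -> valid Q (xs k)) /\
  (forall k : Z, (a <= k < b)%Z -> step Q (xs k) (xs (k + 1)%Z)).

Definition dd (Q : Table) (x : Phase) : R := radius Q (side x) * sin (theta x).
Definition tau (Q : Table) (x y : Phase) : R :=
  sqrt ((px Q y - px Q x) ^ 2 + (py Q y - py Q x) ^ 2).

Record Mat2 := mkMat2 { a11 : R; a12 : R; a21 : R; a22 : R }.
Definition mmul (A B : Mat2) : Mat2 :=
  mkMat2 (a11 A * a11 B + a12 A * a21 B) (a11 A * a12 B + a12 A * a22 B)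
         (a21 A * a11 B + a22 A * a21 B) (a21 A * a12 B + a22 A * a22 B).
Definition mid : Mat2 := mkMat2 1 0 0 1.

(** D_x F in (phi,theta) coordinates, where y = F x (formula from the paper). *)
Definition DF (Q : Table) (x y : Phase) : Mat2 :=
  let t := tau Q x y in let d0 := dd Q x in let d1 := dd Q y in
  mkMat2 ((t - d0) / d1) (t / d1) ((t - d0 - d1) / d1) ((t - d1) / d1).

(** D_{F^m x} F^j along the orbit xs (chain rule):
    DF(x_{m+j-1}) * ... * DF(x_m). *)
Fixpoint DFiter (Q : Table) (xs : Z -> Phase) (m : Z) (j : nat) : Mat2 :=
  match j with
  | O => mid
  | S j' => mmul (DF Q (xs (m + Z.of_nat j')%Z) (xs (m + Z.of_nat j' + 1)%Z))
                 (DFiter Q xs m j')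
  end.

Definition DFseg (Q : Table) (xs : Z -> Phase) (m n : Z) : Mat2 :=
  DFiter Q xs m (Z.to_nat (n - m)).

Definition pos_defocusing (Q : Table) (xs : Z -> Phase) (m n : Z) : Prop :=
  (m <= n)%Z /\
  let A := DFseg Q xs m n in 0 < a11 A /\ 0 < a12 A /\ 0 < a21 A /\ 0 < a22 A.

Definition neg_defocusing (Q : Table) (xs : Z -> Phase) (m n : Z) : Prop :=
  (m <= n)%Z /\
  let A := DFseg Q xs m n in a11 A < 0 /\ a12 A < 0 /\ a21 A < 0 /\ a22 A < 0.

(* Main.v *)
Require Import Defs.
From Stdlib Require Import Reals ZArith Lra Lia Psatz.
Open Scope R_scope.

Lemma same_side_DF (Q : Table) (x y : Phase) :
  lemon_table Q -> step Q x y -> side y = side x ->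
  DF Q x y = mkMat2 1 2 0 1.
Proof.
  intros HQ [[[Htx1 Htx2] _] [[[Hty1 Hty2] _] [t [Ht [E1 [E2 [E3 E4]]]]]]] Hs.
  assert (Hrho : 0 < radius Q (side x)).
  { destruct HQ as [H1 [H2 _]]; unfold radius; destruct (side x); lra. }
  unfold DF, tau, dd, px, py in *. rewrite Hs in *.
  unfold vx, vy in *.
  set (r := radius Q (side x)) in *.
  set (a := cos (phi x)) in *. set (b := sin (phi x)) in *.
  set (A := cos (phi y)) in *. set (B := sin (phi y)) in *.
  set (ct := cos (theta x)) in *. set (st := sin (theta x)) in *.
  set (cy := cos (theta y)) in *. set (sy := sin (theta y)) in *.
  assert (Iab : a*a + b*b = 1) by (pose proof (sin2_cos2 (phi x)); unfold Rsqr in *; unfold a, b; lra).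
  assert (IAB : A*A + B*B = 1) by (pose proof (sin2_cos2 (phi y)); unfold Rsqr in *; unfold A, B; lra).
  assert (It : ct*ct + st*st = 1) by (pose proof (sin2_cos2 (theta x)); unfold Rsqr in *; unfold ct, st; lra).
  assert (Iy : cy*cy + sy*sy = 1) by (pose proof (sin2_cos2 (theta y)); unfold Rsqr in *; unfold cy, sy; lra).
  assert (Hst : 0 < st) by (apply sin_gt_0; lra).
  assert (Hsy : 0 < sy) by (apply sin_gt_0; lra).
  set (vx0 := ct * - b + st * - a) in *.
  set (vy0 := ct * a + st * - b) in *.
  assert (F1 : r * A = r * a + t * vx0) by lra.
  assert (F2 : r * B = r * b + t * vy0) by lra.
  assert (Hv : vx0*vx0 + vy0*vy0 = 1).
  { unfold vx0, vy0. nra. }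
  assert (Hd : a * vx0 + b * vy0 = - st).
  { unfold vx0, vy0. nra. }
  assert (Ht2 : t = 2 * r * st).
  { assert (H : r*r*(A*A+B*B) = r*r*(a*a+b*b) + 2*r*t*(a*vx0+b*vy0) + t*t*(vx0*vx0+vy0*vy0)).
    { replace (r*r*(A*A+B*B)) with ((r*A)*(r*A) + (r*B)*(r*B)) by ring.
      rewrite F1, F2. ring. }
    rewrite IAB, Iab, Hd, Hv in H.
    assert (t * (t - 2*r*st) = 0) by nra.
    apply Rmult_integral in H0. destruct H0; lra. }
  assert (Hsy2 : sy = vx0 * A + vy0 * B).
  { set (dot := vx0 * A + vy0 * B) in *.
    assert (G : sy * (A*A+B*B) + cy*(A*B - A*B) = -(vx0*A + vy0*B) + 2*dot*(A*A+B*B)).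
    { nra. }
    rewrite IAB in G. unfold dot in *. nra. }
  assert (Hsyst : sy = st).
  { assert (r * sy = r * st).
    { rewrite Hsy2. replace (r * (vx0*A + vy0*B)) with (vx0*(r*A) + vy0*(r*B)) by ring.
      rewrite F1, F2. nra. }
    apply Rmult_eq_reg_l in H; lra. }
  assert (Htau : sqrt ((cenx Q (side x) + r * A - (cenx Q (side x) + r * a)) ^ 2 +
                       (ceny Q (side x) + r * B - (ceny Q (side x) + r * b)) ^ 2) = t).
  { replace ((cenx Q (side x) + r * A - (cenx Q (side x) + r * a)) ^ 2 +
             (ceny Q (side x) + r * B - (ceny Q (side x) + r * b)) ^ 2) with (t ^ 2).
    - apply sqrt_pow2; lra.
    - replace (cenx Q (side x) + r * A - (cenx Q (side x) + r * a)) with (r*A - r*a) by ring.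
      replace (ceny Q (side x) + r * B - (ceny Q (side x) + r * b)) with (r*B - r*b) by ring.
      rewrite F1, F2. nra. }
  rewrite Htau, Hsyst, Ht2.
  assert (r * st <> 0) by nra.
  f_equal; field; split; lra.
Qed.

Definition unip (M : Mat2) : Prop :=
  a11 M = 1 /\ a21 M = 0 /\ a22 M = 1 /\ 0 <= a12 M.

Lemma mmul_assoc (A B C : Mat2) : mmul A (mmul B C) = mmul (mmul A B) C.
Proof. destruct A, B, C; unfold mmul; simpl; f_equal; ring. Qed.

Lemma mmul_mid_l (A : Mat2) : mmul mid A = A.
Proof. destruct A; unfold mmul, mid; simpl; f_equal; ring. Qed.

Lemma DFiter_add (Q : Table) (xs : Z -> Phase) (m : Z) (a b : nat) :
  DFiter Q xs m (a + b) = mmul (DFiter Q xs (m + Z.of_nat a) b) (DFiter Q xs m a).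
Proof.
  induction b as [|b IH].
  - rewrite Nat.add_0_r. simpl. now rewrite mmul_mid_l.
  - rewrite Nat.add_succ_r. simpl. rewrite IH, mmul_assoc.
    replace (m + Z.of_nat a + Z.of_nat b)%Z with (m + Z.of_nat (a + b))%Z by lia.
    reflexivity.
Qed.

Lemma unip_mul A B : unip A -> unip B -> unip (mmul A B).
Proof.
  destruct A, B; unfold unip, mmul; simpl. intros [? [? [? ?]]] [? [? [? ?]]]; subst.
  repeat split; try ring. nra.
Qed.

Lemma DFiter_unip (Q : Table) (xs : Z -> Phase) (m : Z) (k : nat) :
  lemon_table Q ->
  (forall j : nat, (j < k)%nat ->
     step Q (xs (m + Z.of_nat j)%Z) (xs (m + Z.of_nat j + 1)%Z) /\
     side (xs (m + Z.of_nat j + 1)%Z) = side (xs (m + Z.of_nat j)%Z)) ->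
  unip (DFiter Q xs m k).
Proof.
  intros HQ. induction k as [|k IH]; intros H.
  - simpl. unfold unip, mid; simpl; repeat split; lra.
  - simpl. apply unip_mul.
    + destruct (H k ltac:(lia)) as [Hst Hsd].
      rewrite (same_side_DF Q _ _ HQ Hst Hsd). unfold unip; simpl; repeat split; lra.
    + apply IH. intros j Hj. apply H. lia.
Qed.

Lemma pos_sandwich A M B : unip A -> unip B ->
  0 < a11 M /\ 0 < a12 M /\ 0 < a21 M /\ 0 < a22 M ->
  let N := mmul A (mmul M B) in 0 < a11 N /\ 0 < a12 N /\ 0 < a21 N /\ 0 < a22 N.
Proof.
  destruct A as [p11 p12 p21 p22], B as [q11 q12 q21 q22], M as [m11 m12 m21 m22];
  unfold unip, mmul; simpl.
  intros [? [? [? Hp]]] [? [? [? Hq]]] [? [? [? ?]]]; subst.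
  assert (0 <= p12*m21) by nra. assert (0 <= m11*q12) by nra. assert (0<=m21*q12) by nra.
  assert (0 <= p12*(m21*q12)) by nra. assert (0<=p12*m22) by nra.
  repeat split; nra.
Qed.

Lemma neg_sandwich A M B : unip A -> unip B ->
  a11 M < 0 /\ a12 M < 0 /\ a21 M < 0 /\ a22 M < 0 ->
  let N := mmul A (mmul M B) in a11 N < 0 /\ a12 N < 0 /\ a21 N < 0 /\ a22 N < 0.
Proof.
  destruct A as [p11 p12 p21 p22], B as [q11 q12 q21 q22], M as [m11 m12 m21 m22];
  unfold unip, mmul; simpl.
  intros [? [? [? Hp]]] [? [? [? Hq]]] [? [? [? ?]]]; subst.
  assert (p12*m21 <= 0) by nra. assert (m11*q12 <= 0) by nra. assert (m21*q12 <= 0) by nra.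
  assert (p12*(m21*q12) <= 0) by nra. assert (p12*m22 <= 0) by nra.
  repeat split; nra.
Qed.

Theorem mainTheorem5 (Q : Table) (xs : Z -> Phase) (m n m' n' : Z) :
  lemon_table Q ->
  is_orbit Q xs m' n' ->
  (m' <= m)%Z -> (n <= n')%Z ->
  (forall k : Z, (m' <= k <= m)%Z -> side (xs k) = side (xs m)) ->
  (forall k : Z, (n <= k <= n')%Z -> side (xs k) = side (xs n)) ->
  (pos_defocusing Q xs m n -> pos_defocusing Q xs m' n') /\
  (neg_defocusing Q xs m n -> neg_defocusing Q xs m' n').
Proof.
  intros HQ [Hv Hst] Hm Hn Hsm Hsn.
  assert (Key : (m <= n)%Z ->
    DFseg Q xs m' n' = mmul (DFiter Q xs n (Z.to_nat (n' - n)))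
       (mmul (DFseg Q xs m n) (DFiter Q xs m' (Z.to_nat (m - m')))) /\
    unip (DFiter Q xs n (Z.to_nat (n' - n))) /\
    unip (DFiter Q xs m' (Z.to_nat (m - m')))).
  { intros Hmn. split; [|split].
    - unfold DFseg.
      replace (Z.to_nat (n' - m')) with
        ((Z.to_nat (m - m') + Z.to_nat (n - m)) + Z.to_nat (n' - n))%nat by lia.
      rewrite DFiter_add, DFiter_add.
      replace (m' + Z.of_nat (Z.to_nat (m - m') + Z.to_nat (n - m)))%Z with n by lia.
      replace (m' + Z.of_nat (Z.to_nat (m - m')))%Z with m by lia.
      now rewrite mmul_assoc.
    - apply DFiter_unip; auto. intros j Hj. split.
      + apply Hst; lia.
      + rewrite (Hsn (n + Z.of_nat j + 1)%Z ltac:(lia)).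
        rewrite (Hsn (n + Z.of_nat j)%Z ltac:(lia)). reflexivity.
    - apply DFiter_unip; auto. intros j Hj. split.
      + apply Hst; lia.
      + rewrite (Hsm (m' + Z.of_nat j + 1)%Z ltac:(lia)).
        rewrite (Hsm (m' + Z.of_nat j)%Z ltac:(lia)). reflexivity. }
  split.
  - intros [Hmn Hp]. split; [lia|]. destruct (Key Hmn) as [E [U1 U2]].
    rewrite E. exact (pos_sandwich _ _ _ U1 U2 Hp).
  - intros [Hmn Hp]. split; [lia|]. destruct (Key Hmn) as [E [U1 U2]].
    rewrite E. exact (neg_sandwich _ _ _ U1 U2 Hp).
Qed.
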